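(* For any graph $F$ on $y\ge1$ vertices with average degree $d$ and any real $\lambda>0$, \[ \frac{\lambda Z_F'(\lambda)}{Z_F(\lambda)}\ \ge\ \frac{\lambda}{1+\lambda}\,y\,(1+\lambda)^{-d}, \qquad \log Z_F(\lambda)\ \ge\ \begin{cases} y\log(1+\lambda) & \text{if } d=0,\\[2pt] \dfrac{y}{d}\bigl(1-(1+\lambda)^{-d}\bigr) & \text{if } d>0.\end{cases} \]
   Context: $\log$ is the natural logarithm. For a graph $F$, $Z_F(\lambda)=\sum_{I}\lambda^{|I|}$ where the sum is over all independent sets $I$ of $F$ (including $\varnothing$), and $Z_F'$ is its derivative in $\lambda$. The average degree of $F$ is $2|E(F)|/|V(F)|$. *)

(* Defs.v *)
From Stdlib Require Import Reals Lra Lia Arith List Bool.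
Import ListNotations.
Open Scope R_scope.

(* A finite simple graph F on the vertex set {0,...,y-1} is given by
   y : nat and a symmetric irreflexive adjacency relation adj : nat -> nat -> bool
   (only its restriction to vertices < y matters).
   Subsets of {0,...,y-1} are encoded by bitmasks m < 2^y: i is in the
   subset iff Nat.testbit m i = true. *)

Definition inset (m i : nat) : bool := Nat.testbit m i.

Definition indep (adj : nat -> nat -> bool) (y m : nat) : bool :=
  forallb (fun i => forallb (fun j => negb (adj i j && inset m i && inset m j))
                            (seq 0 y)) (seq 0 y).

Definition card (y m : nat) : nat := length (filter (inset m) (seq 0 y)).

Definition ZF (adj : nat -> nat -> bool) (y : nat) (lam : R) : R :=
  fold_right Rplus 0
    (map (fun m => if indep adj y m then lam ^ card y m else 0) (seq 0 (2 ^ y))).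

Definition ZFprime (adj : nat -> nat -> bool) (y : nat) (lam : R) : R :=
  fold_right Rplus 0
    (map (fun m => if indep adj y m
                   then INR (card y m) * lam ^ (pred (card y m)) else 0)
         (seq 0 (2 ^ y))).

Definition nedges (adj : nat -> nat -> bool) (y : nat) : nat :=
  length (filter (fun p => adj (fst p) (snd p))
            (flat_map (fun i => map (fun j => (i, j)) (seq 0 i)) (seq 0 y))).

Definition avgdeg (adj : nat -> nat -> bool) (y : nat) : R :=
  2 * INR (nedges adj y) / INR y.

(* Main.v *)
Require Import Defs.
From Stdlib Require Import Reals.
Open Scope R_scope.
From Stdlib Require Import Lra Lia Arith List Bool Permutation FunctionalExtensionality.
Import ListNotations.
Open Scope R_scope.

Definition sumR (f : nat -> R) (l : list nat) : R := fold_right Rplus 0 (map f l).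

Lemma sumR_nil f : sumR f [] = 0. Proof. reflexivity. Qed.
Lemma sumR_cons f a l : sumR f (a :: l) = f a + sumR f l. Proof. reflexivity. Qed.

Lemma sumR_app f l1 l2 : sumR f (l1 ++ l2) = sumR f l1 + sumR f l2.
Proof. induction l1; unfold sumR in *; simpl; [lra|]. rewrite IHl1; lra. Qed.

Lemma sumR_plus f g l : sumR (fun x => f x + g x) l = sumR f l + sumR g l.
Proof. induction l; unfold sumR in *; simpl; [lra|]. rewrite IHl; lra. Qed.

Lemma sumR_scal c f l : sumR (fun x => c * f x) l = c * sumR f l.
Proof. induction l; unfold sumR in *; simpl; [lra|]. rewrite IHl; lra. Qed.

Lemma sumR_ext f g l : (forall x, In x l -> f x = g x) -> sumR f l = sumR g l.
Proof. induction l; intros H; unfold sumR in *; simpl; [lra|].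
  rewrite H by (left; auto). rewrite IHl; auto. intros; apply H; right; auto. Qed.

Lemma sumR_le f g l : (forall x, In x l -> f x <= g x) -> sumR f l <= sumR g l.
Proof. induction l; intros H; unfold sumR in *; simpl; [lra|].
  assert (f a <= g a) by (apply H; left; auto).
  assert (fold_right Rplus 0 (map f l) <= fold_right Rplus 0 (map g l)) by
   (apply IHl; intros; apply H; right; auto). lra. Qed.

Lemma sumR_nonneg f l : (forall x, In x l -> 0 <= f x) -> 0 <= sumR f l.
Proof. intros H. replace 0 with (sumR (fun _ => 0) l).
  apply sumR_le; auto. clear H. induction l; unfold sumR in *; simpl; auto. rewrite IHl; lra. Qed.

Lemma sumR_perm f l l' : Permutation l l' -> sumR f l = sumR f l'.
Proof. induction 1; unfold sumR in *; simpl; lra. Qed.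

Lemma sumR_map f g l : sumR f (map g l) = sumR (fun x => f (g x)) l.
Proof. unfold sumR. rewrite map_map. reflexivity. Qed.

Lemma sumR_swap (F : nat -> nat -> R) l1 l2 :
  sumR (fun a => sumR (fun b => F a b) l2) l1 = sumR (fun b => sumR (fun a => F a b) l1) l2.
Proof. induction l1.
  - rewrite sumR_nil. transitivity (sumR (fun _ => 0) l2).
    + clear F. induction l2; unfold sumR in *; simpl; lra.
    + apply sumR_ext; reflexivity.
  - rewrite sumR_cons, IHl1.
    transitivity (sumR (fun b => F a b + sumR (fun a0 => F a0 b) l1) l2).
    + rewrite sumR_plus. reflexivity.
    + apply sumR_ext; intros; rewrite sumR_cons; reflexivity. Qed.

Lemma sumR_ind01 (p : nat -> bool) l :
  INR (length (filter p l)) = sumR (fun v => if p v then 1 else 0) l.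
Proof. induction l; simpl; auto. rewrite sumR_cons, <- IHl.
  destruct (p a); simpl length; [rewrite S_INR|]; lra. Qed.

Definition tog (u m : nat) : nat := Nat.lxor m (2 ^ u).

Lemma tog_bit u m i : inset (tog u m) i = if Nat.eqb u i then negb (inset m i) else inset m i.
Proof. unfold inset, tog. rewrite Nat.lxor_spec, Nat.pow2_bits_eqb.
  destruct (u =? i)%nat; destruct (Nat.testbit m i); reflexivity. Qed.

Lemma tog_invol u m : tog u (tog u m) = m.
Proof. unfold tog. rewrite Nat.lxor_assoc, Nat.lxor_nilpotent, Nat.lxor_0_r. reflexivity. Qed.

Lemma tog_lt y u m : (u < y)%nat -> (m < 2 ^ y)%nat -> (tog u m < 2 ^ y)%nat.
Proof. intros Hu Hm.
  assert (E : tog u m = (tog u m) mod 2 ^ y).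
  { apply Nat.bits_inj; intros i. destruct (Nat.lt_ge_cases i y).
    - rewrite Nat.mod_pow2_bits_low; auto.
    - rewrite Nat.mod_pow2_bits_high by auto. unfold tog. rewrite Nat.lxor_spec.
      rewrite <- (Nat.mod_small m (2^y)) by auto.
      rewrite Nat.mod_pow2_bits_high by auto. rewrite Nat.pow2_bits_false by lia. reflexivity. }
  rewrite E. apply Nat.mod_upper_bound. apply Nat.pow_nonzero; lia. Qed.

Lemma tog_perm y u : (u < y)%nat -> Permutation (map (tog u) (seq 0 (2^y))) (seq 0 (2^y)).
Proof. intros Hu. apply NoDup_Permutation.
  - apply FinFun.Injective_map_NoDup. intros a b H.
    rewrite <- (tog_invol u a), <- (tog_invol u b), H; auto. apply seq_NoDup.
  - apply seq_NoDup.
  - intros x; rewrite in_map_iff, in_seq; split.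
    + intros [z [<- Hz]]. apply in_seq in Hz. split; [lia|]. simpl. apply tog_lt; lia.
    + intros Hx. exists (tog u x). rewrite tog_invol. split; auto. apply in_seq.
      split; [lia|]. simpl. apply tog_lt; lia. Qed.

Lemma sumR_tog y u f : (u < y)%nat ->
  sumR f (seq 0 (2^y)) = sumR (fun m => f (tog u m)) (seq 0 (2^y)).
Proof. intros Hu. rewrite <- (sumR_map f (tog u)). symmetry. apply sumR_perm. apply tog_perm; auto. Qed.

Lemma filter_len_S (f g : nat -> bool) u l : NoDup l -> In u l -> f u = false -> g u = true ->
  (forall x, x <> u -> g x = f x) -> length (filter g l) = S (length (filter f l)).
Proof. induction l as [|a l IH]; intros Hnd Hin Hf Hg Hx; [destruct Hin|].
  inversion Hnd; subst. simpl. destruct Hin as [<-|Hin].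
  - rewrite Hf, Hg. simpl. f_equal. f_equal. apply filter_ext_in. intros x Hx'. apply Hx.
    intros ->; contradiction.
  - rewrite Hx by (intros ->; contradiction). destruct (f a); simpl; auto. Qed.

Lemma card_tog y u m : (u < y)%nat -> inset m u = false -> card y (tog u m) = S (card y m).
Proof. intros Hu Hm. unfold card. apply filter_len_S with (u := u).
  apply seq_NoDup. apply in_seq; lia. auto. rewrite tog_bit, Nat.eqb_refl, Hm; auto.
  intros x Hx. rewrite tog_bit. destruct (Nat.eqb_spec u x); auto; congruence. Qed.

Lemma indep_spec adj y m : indep adj y m = true <->
  forall i j, (i < y)%nat -> (j < y)%nat -> adj i j && inset m i && inset m j = false.
Proof. unfold indep. rewrite forallb_forall. split.
  - intros H i j Hi Hj. specialize (H i (proj2 (in_seq _ _ _) (conj (Nat.le_0_l _) Hi))).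
    rewrite forallb_forall in H. specialize (H j (proj2 (in_seq _ _ _) (conj (Nat.le_0_l _) Hj))).
    apply negb_true_iff in H; auto.
  - intros H i Hi. rewrite forallb_forall. intros j Hj. apply in_seq in Hi, Hj.
    apply negb_true_iff. apply H; lia. Qed.

Lemma indep_sub adj y m m' : (forall i, inset m i = true -> inset m' i = true) ->
  indep adj y m' = true -> indep adj y m = true.
Proof. rewrite !indep_spec. intros Hs H i j Hi Hj. specialize (H i j Hi Hj).
  destruct (adj i j), (inset m i) eqn:E1, (inset m j) eqn:E2; simpl in *; auto.
  rewrite (Hs i E1), (Hs j E2) in H. discriminate. Qed.

Definition avoid (S : list nat) (m : nat) : bool := forallb (fun i => negb (inset m i)) S.

Lemma avoid_spec S m : avoid S m = true <-> forall i, In i S -> inset m i = false.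
Proof. unfold avoid. rewrite forallb_forall. split; intros H i Hi; apply negb_true_iff; auto.
  Qed.

Definition Zs adj y S t := sumR (fun m => if indep adj y m && avoid S m then t ^ card y m else 0) (seq 0 (2^y)).

Lemma Zs_nonneg adj y S t : 0 <= t -> 0 <= Zs adj y S t.
Proof. intros Ht. apply sumR_nonneg; intros. destruct (_ && _); [apply pow_le; auto|lra]. Qed.

Lemma Zs_nil adj y t : Zs adj y [] t = ZF adj y t.
Proof. unfold Zs, ZF, sumR. f_equal. apply map_ext. intros m. simpl. rewrite andb_true_r. auto. Qed.

Lemma sub_tog u m : inset m u = false -> forall i, inset m i = true -> inset (tog u m) i = true.
Proof. intros H i Hi. rewrite tog_bit. destruct (Nat.eqb_spec u i); subst; auto. congruence. Qed.

Lemma Zs_step adj y S u t : (u < y)%nat -> 0 <= t -> Zs adj y S t <= (1 + t) * Zs adj y (u :: S) t.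
Proof. intros Hu Ht. unfold Zs.
  set (w := fun m => if indep adj y m && avoid S m then t ^ card y m else 0).
  set (w' := fun m => if indep adj y m && avoid (u::S) m then t ^ card y m else 0).
  change (sumR w (seq 0 (2^y)) <= (1+t) * sumR w' (seq 0 (2^y))).
  transitivity (sumR (fun m => (if inset m u then 0 else w m) + (if inset m u then w m else 0)) (seq 0 (2^y))).
  { apply sumR_le; intros. destruct (inset x u); lra. }
  rewrite sumR_plus. rewrite (sumR_tog y u (fun m => if inset m u then w m else 0)) by auto.
  replace ((1+t) * sumR w' (seq 0 (2^y))) with (sumR w' (seq 0 (2^y)) + sumR (fun m => t * w' m) (seq 0 (2^y)))
    by (rewrite sumR_scal; ring).
  apply Rplus_le_compat.
  - apply sumR_le; intros m _. unfold w, w'. simpl. destruct (inset m u); simpl; [rewrite andb_false_r; lra|lra].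
  - apply sumR_le; intros m _. unfold w, w'. rewrite tog_bit, Nat.eqb_refl.
    destruct (inset m u) eqn:Em; simpl.
    + simpl. rewrite Em. simpl. rewrite andb_false_r. lra.
    + destruct (indep adj y (tog u m) && avoid S (tog u m)) eqn:E.
      * apply andb_true_iff in E as [E1 E2].
        rewrite (indep_sub adj y m (tog u m) (sub_tog u m Em) E1).
        assert (avoid S m = true).
        { rewrite avoid_spec in *. intros i Hi. specialize (E2 i Hi).
          destruct (inset m i) eqn:Ei; auto. rewrite (sub_tog u m Em i Ei) in E2; auto. }
        rewrite H. simpl. rewrite card_tog by auto. simpl. rewrite Em. simpl. lra.
      * apply Rmult_le_pos; auto. match goal with |- _ <= (if ?b then _ else _) => destruct b end; [apply pow_le; auto|lra]. Qed.

Lemma Zs_chain adj y S t : (forall u, In u S -> (u < y)%nat) -> 0 <= t ->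
  Zs adj y [] t <= (1 + t) ^ length S * Zs adj y S t.
Proof. intros HS Ht. induction S as [|u S IH]; simpl.
  - lra.
  - assert (H1 := IH (fun v Hv => HS v (or_intror Hv))).
    assert (H2 := Zs_step adj y S u t (HS u (or_introl eq_refl)) Ht).
    assert (0 <= (1+t)^length S) by (apply pow_le; lra).
    apply Rle_trans with (1 := H1).
    replace ((1 + t) * (1 + t) ^ length S * Zs adj y (u :: S) t) with
      ((1 + t) ^ length S * ((1+t) * Zs adj y (u :: S) t)) by ring.
    apply Rmult_le_compat_l; auto. Qed.

Definition Nv (adj : nat -> nat -> bool) y v := v :: filter (adj v) (seq 0 y).
Definition deg (adj : nat -> nat -> bool) y v := length (filter (adj v) (seq 0 y)).

Lemma indep_tog adj y v m : (forall i j, adj i j = adj j i) -> (forall i, adj i i = false) ->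
  (v < y)%nat -> indep adj y m = true -> avoid (Nv adj y v) m = true -> indep adj y (tog v m) = true.
Proof. intros Hsym Hirr Hv Hi Ha. rewrite indep_spec in *. rewrite avoid_spec in Ha.
  intros i j Hi' Hj'. rewrite !tog_bit.
  destruct (Nat.eqb_spec v i), (Nat.eqb_spec v j); subst.
  - rewrite Hirr; auto.
  - destruct (adj i j) eqn:E; auto. rewrite (Ha j); [rewrite andb_false_r; auto|].
    right. apply filter_In; split; auto. apply in_seq; lia.
  - destruct (adj i j) eqn:E; auto. rewrite (Ha i); [auto|].
    right. apply filter_In; split; auto. apply in_seq; lia. rewrite Hsym; auto.
  - apply Hi; auto. Qed.

Lemma ZFprime_lower adj y t : (forall i j, adj i j = adj j i) -> (forall i, adj i i = false) ->
  0 <= t -> t * ZFprime adj y t >= t * sumR (fun v => Zs adj y (Nv adj y v) t) (seq 0 y).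
Proof. intros Hsym Hirr Ht.
  assert (E1 : t * ZFprime adj y t = sumR (fun m => if indep adj y m then INR (card y m) * t ^ card y m else 0) (seq 0 (2^y))).
  { unfold ZFprime. fold (sumR (fun m => if indep adj y m then INR (card y m) * t ^ pred (card y m) else 0) (seq 0 (2^y))).
    rewrite <- sumR_scal. apply sumR_ext; intros m _. destruct (indep adj y m); [|ring].
    destruct (card y m); simpl; ring. }
  rewrite E1. apply Rle_ge.
  transitivity (sumR (fun m => sumR (fun v => if indep adj y m && inset m v then t ^ card y m else 0) (seq 0 y)) (seq 0 (2^y))).
  2:{ apply Req_le, sumR_ext; intros m _. destruct (indep adj y m); simpl.
      - change (INR (card y m)) with (INR (length (filter (inset m) (seq 0 y)))). rewrite sumR_ind01, Rmult_comm, <- sumR_scal. apply sumR_ext; intros.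
        destruct (inset m x); ring.
      - transitivity (sumR (fun _ => 0) (seq 0 y)); [apply sumR_ext; intros; reflexivity|].
        clear. induction (seq 0 y); unfold sumR in *; simpl; lra. }
  rewrite sumR_swap, <- sumR_scal. apply sumR_le. intros v Hv. apply in_seq in Hv.
  rewrite (sumR_tog y v) by lia. unfold Zs. rewrite <- sumR_scal. apply sumR_le. intros m _.
  destruct (indep adj y m && avoid (Nv adj y v) m) eqn:E.
  - apply andb_true_iff in E as [E1' E2].
    assert (Hmv : inset m v = false) by (rewrite avoid_spec in E2; apply E2; left; auto).
    rewrite (indep_tog adj y v m Hsym Hirr) by (auto; lia).
    rewrite tog_bit, Nat.eqb_refl, Hmv. simpl. rewrite card_tog by (auto; lia). simpl. lra.
  - rewrite Rmult_0_r. match goal with |- _ <= (if ?b then _ else _) => destruct b end; [apply pow_le; auto|lra]. Qed.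

Definition sumN (f : nat -> nat) (l : list nat) : nat := fold_right plus 0%nat (map f l).

Lemma sumN_app f l1 l2 : sumN f (l1 ++ l2) = (sumN f l1 + sumN f l2)%nat.
Proof. induction l1; unfold sumN in *; simpl; lia. Qed.

Lemma sumN_plus f g l : sumN (fun x => f x + g x)%nat l = (sumN f l + sumN g l)%nat.
Proof. induction l; unfold sumN in *; simpl; lia. Qed.

Lemma sumN_ext f g l : (forall x, In x l -> f x = g x) -> sumN f l = sumN g l.
Proof. induction l; intros H; unfold sumN in *; simpl; auto.
  rewrite H by (left; auto). rewrite IHl; auto. intros; apply H; right; auto. Qed.

Lemma sumN_ind (p : nat -> bool) l : sumN (fun v => if p v then 1 else 0)%nat l = length (filter p l).
Proof. induction l; unfold sumN in *; simpl; auto. destruct (p a); simpl; lia. Qed.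

Lemma sumN_INR f l : INR (sumN f l) = sumR (fun v => INR (f v)) l.
Proof. induction l; unfold sumN, sumR in *; simpl; auto. rewrite plus_INR, IHl; auto. Qed.

Lemma len_filter_snoc (p : nat -> bool) l n : length (filter p (l ++ [n])) = (length (filter p l) + if p n then 1 else 0)%nat.
Proof. rewrite filter_app, length_app. simpl. destruct (p n); simpl; lia. Qed.

Lemma handshake (adj : nat -> nat -> bool) (Hsym : forall i j, adj i j = adj j i)
  (Hirr : forall i, adj i i = false) n :
  sumN (fun v => length (filter (adj v) (seq 0 n))) (seq 0 n) = (2 * nedges adj n)%nat.
Proof. induction n.
  - reflexivity.
  - assert (EN : nedges adj (S n) = (nedges adj n + length (filter (adj n) (seq 0 n)))%nat).
    { unfold nedges. rewrite seq_S, flat_map_app, filter_app, length_app. simpl.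
      rewrite app_nil_r, filter_map_swap, length_map. reflexivity. }
    rewrite EN. rewrite seq_S. rewrite sumN_app.
    rewrite (sumN_ext _ (fun v => length (filter (adj v) (seq 0 n)) + (if adj v n then 1 else 0))%nat)
      by (intros; simpl; rewrite len_filter_snoc; reflexivity).
    rewrite sumN_plus, IHn, sumN_ind. unfold sumN; simpl.
    rewrite len_filter_snoc, Hirr.
    rewrite (filter_ext (fun v => adj v n) (adj n)) by (intros; apply Hsym). lia. Qed.

Lemma deriv_sum (g g' : nat -> R -> R) l x :
  (forall m, derivable_pt_lim (g m) x (g' m x)) ->
  derivable_pt_lim (fun t => fold_right Rplus 0 (map (fun m => g m t) l)) x
     (fold_right Rplus 0 (map (fun m => g' m x) l)).
Proof. intros H. induction l; simpl.
  - apply derivable_pt_lim_const.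
  - apply (derivable_pt_lim_plus (g a) (fun t => fold_right Rplus 0 (map (fun m => g m t) l))); auto. Qed.

Lemma ZF_deriv adj y x : derivable_pt_lim (ZF adj y) x (ZFprime adj y x).
Proof. unfold ZF, ZFprime.
  apply (deriv_sum (fun m t => if indep adj y m then t ^ card y m else 0)
                   (fun m t => if indep adj y m then INR (card y m) * t ^ pred (card y m) else 0)).
  intros m. destruct (indep adj y m).
  - apply derivable_pt_lim_pow.
  - apply derivable_pt_lim_const. Qed.

Lemma ZF_ge1 adj y t : 0 <= t -> 1 <= ZF adj y t.
Proof. intros Ht. unfold ZF. fold (sumR (fun m => if indep adj y m then t ^ card y m else 0) (seq 0 (2^y))).
  assert (E : seq 0 (2^y) = 0%nat :: seq 1 (2^y - 1)).
  { assert (2^y <> 0)%nat by (apply Nat.pow_nonzero; lia).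
    replace (2^y)%nat with (S (2^y - 1)) at 1 by lia. reflexivity. }
  rewrite E, sumR_cons.
  assert (I0 : forall i, inset 0 i = false) by (intros; apply Nat.bits_0).
  assert (indep adj y 0 = true) by (apply indep_spec; intros; rewrite !I0, andb_false_r; auto).
  assert (card y 0 = 0%nat).
  { unfold card. rewrite (filter_ext _ (fun _ => false)) by apply I0. clear. induction (seq 0 y); auto. }
  rewrite H, H0. simpl.
  assert (0 <= sumR (fun m => if indep adj y m then t ^ card y m else 0) (seq 1 (2 ^ y - 1))).
  { apply sumR_nonneg; intros. destruct (indep adj y x); [apply pow_le|]; lra. }
  lra. Qed.

Lemma sumR_affine A B f l : sumR (fun v => A + B * f v) l = A * INR (length l) + B * sumR f l.
Proof. induction l; unfold sumR in *; simpl; [lra|]. rewrite IHl. destruct (length l); [simpl; lra|]. rewrite S_INR. lra. Qed.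

Lemma tangent (k : nat -> R) l d L :
  sumR (fun v => exp (- (k v * L))) l >= exp (- (d * L)) * (INR (length l) - (sumR k l - INR (length l) * d) * L).
Proof. apply Rle_ge.
  transitivity (sumR (fun v => exp (- (d*L)) + (- exp (- (d*L)) * L) * (k v - d)) l).
  - rewrite sumR_affine.
    assert (E : sumR (fun v => k v - d) l = sumR (fun v => -d + 1 * k v) l) by (apply sumR_ext; intros; lra).
    rewrite E, sumR_affine. apply Req_le. ring.
  - apply sumR_le; intros v _.
    replace (exp (- (k v * L))) with (exp (- (d*L)) * exp (- ((k v - d) * L))).
    + assert (H1 := exp_ineq1_le (- ((k v - d) * L))). assert (0 < exp (- (d*L))) by apply exp_pos.
      nra.
    + rewrite <- exp_plus. f_equal. ring. Qed.

Lemma ratio_bound adj y t (Hy : (1 <= y)%nat) (Hsym : forall i j, adj i j = adj j i)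
  (Hirr : forall i, adj i i = false) : 0 < t ->
  ZFprime adj y t / ZF adj y t >= INR y / (1 + t) * exp (- avgdeg adj y * ln (1 + t)).
Proof. intros Ht.
  set (Z := ZF adj y t). set (a := 1 + t). set (L := ln a). set (d := avgdeg adj y).
  assert (HZ : 1 <= Z) by (apply ZF_ge1; lra).
  assert (Ha : 0 < a) by (unfold a; lra).
  assert (H1 : ZFprime adj y t >= sumR (fun v => Zs adj y (Nv adj y v) t) (seq 0 y)).
  { assert (H := ZFprime_lower adj y t Hsym Hirr (Rlt_le _ _ Ht)).
    apply Rle_ge. apply Rge_le in H. apply Rmult_le_reg_l with t; auto. }
  assert (H2 : forall v, In v (seq 0 y) -> Z / a * exp (- (INR (deg adj y v) * L)) <= Zs adj y (Nv adj y v) t).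
  { intros v Hv. apply in_seq in Hv.
    assert (Hc := Zs_chain adj y (Nv adj y v) t).
    rewrite Zs_nil in Hc. fold Z in Hc.
    assert (Hl : length (Nv adj y v) = S (deg adj y v)) by reflexivity.
    rewrite Hl in Hc. fold a in Hc.
    assert (Hp : a ^ S (deg adj y v) = a * exp (INR (deg adj y v) * L)).
    { simpl. f_equal. rewrite <- Rpower_pow by auto. reflexivity. }
    rewrite Hp in Hc.
    assert (HS : Z <= a * exp (INR (deg adj y v) * L) * Zs adj y (Nv adj y v) t).
    { apply Hc; [|lra]. intros u [<-|Hu]; [lia|]. apply filter_In in Hu as [Hu _].
      apply in_seq in Hu; lia. }
    rewrite exp_Ropp. assert (0 < exp (INR (deg adj y v) * L)) by apply exp_pos.
    unfold Rdiv. apply (Rmult_le_reg_l (a * exp (INR (deg adj y v) * L))).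
    { apply Rmult_lt_0_compat; auto. }
    replace (a * exp (INR (deg adj y v) * L) * (Z * / a * / exp (INR (deg adj y v) * L))) with Z
      by (field; split; lra). lra. }
  assert (H3 := sumR_le _ _ _ H2). rewrite sumR_scal in H3.
  assert (H4 := tangent (fun v => INR (deg adj y v)) (seq 0 y) d L).
  rewrite length_seq in H4.
  assert (Hs : sumR (fun v => INR (deg adj y v)) (seq 0 y) = INR y * d).
  { rewrite <- sumN_INR. unfold deg. rewrite handshake by auto. unfold d, avgdeg.
    rewrite mult_INR. simpl (INR 2). field. apply not_0_INR. lia. }
  rewrite Hs in H4. replace (INR y - (INR y * d - INR y * d) * L) with (INR y) in H4 by ring.
  assert (0 < Z / a) by (apply Rdiv_lt_0_compat; lra).
  assert (H5 : Z / a * (exp (- (d * L)) * INR y) <= ZFprime adj y t).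
  { apply Rge_le in H4, H1. apply Rle_trans with (2 := H1). apply Rle_trans with (2 := H3).
    apply Rmult_le_compat_l; lra. }
  apply Rle_ge. unfold Rdiv at 2. apply (Rmult_le_reg_l Z); [lra|].
  replace (Z * (ZFprime adj y t * / Z)) with (ZFprime adj y t) by (field; lra).
  replace (- d * L) with (- (d * L)) by ring.
  replace (Z * (INR y / a * exp (- (d * L)))) with (Z / a * (exp (- (d * L)) * INR y)) by (field; lra).
  exact H5. Qed.

Lemma deriv_ext (f g : R -> R) x l l' : derivable_pt_lim f x l -> (forall t, f t = g t) -> l = l' ->
  derivable_pt_lim g x l'.
Proof. intros D H <-. replace g with f; auto. apply functional_extensionality; auto. Qed.

Lemma mono (f g f' g' : R -> R) b : 0 < b ->
  (forall c, 0 <= c <= b -> derivable_pt_lim f c (f' c)) ->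
  (forall c, 0 <= c <= b -> derivable_pt_lim g c (g' c)) ->
  (forall c, 0 < c < b -> f' c >= g' c) -> f b - f 0 >= g b - g 0.
Proof. intros Hb Hf Hg Hc.
  destruct (MVT_cor2 (fun x => f x - g x) (fun x => f' x - g' x) 0 b Hb) as [c [E Hc']].
  { intros c H. apply (derivable_pt_lim_minus f g); auto. }
  assert (f' c - g' c >= 0) by (specialize (Hc c Hc'); lra).
  assert ((f' c - g' c) * (b - 0) >= 0) by (apply Rle_ge, Rmult_le_pos; lra). lra. Qed.

Lemma d_ln1 c : -1 < c -> derivable_pt_lim (fun t => ln (1 + t)) c (/ (1 + c)).
Proof. intros Hc.
  assert (D1 : derivable_pt_lim (fun t => 1 + t) c 1).
  { eapply (deriv_ext (fct_cte 1 + id)%F).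
    - apply derivable_pt_lim_plus; [apply derivable_pt_lim_const|apply derivable_pt_lim_id].
    - intros; reflexivity.
    - ring. }
  eapply (deriv_ext (comp ln (fun t => 1 + t))).
  - apply derivable_pt_lim_comp; [exact D1|]. apply derivable_pt_lim_ln. lra.
  - intros; reflexivity.
  - ring. Qed.

Lemma d_g1 y d c : -1 < c -> d <> 0 ->
  derivable_pt_lim (fun t => INR y / d * (1 - exp (- d * ln (1 + t)))) c
     (INR y / (1 + c) * exp (- d * ln (1 + c))).
Proof. intros Hc Hd.
  assert (D3 : derivable_pt_lim (fun t => - d * ln (1 + t)) c (- d * / (1 + c))).
  { eapply (deriv_ext (mult_real_fct (-d) (fun t => ln (1 + t)))).
    - apply derivable_pt_lim_scal, d_ln1; auto.
    - intros; reflexivity.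
    - reflexivity. }
  assert (D4 : derivable_pt_lim (fun t => exp (- d * ln (1 + t))) c (exp (- d * ln (1 + c)) * (- d * / (1 + c)))).
  { eapply (deriv_ext (comp exp (fun t => - d * ln (1 + t)))).
    - apply derivable_pt_lim_comp; [exact D3|]. apply derivable_pt_lim_exp.
    - intros; reflexivity.
    - reflexivity. }
  eapply (deriv_ext (mult_real_fct (INR y / d) (fct_cte 1 - (fun t => exp (- d * ln (1 + t))))%F)).
  - apply derivable_pt_lim_scal, derivable_pt_lim_minus; [apply derivable_pt_lim_const|exact D4].
  - intros; reflexivity.
  - field. split; lra. Qed.

Lemma d_g0 y c : -1 < c ->
  derivable_pt_lim (fun t => INR y * ln (1 + t)) c (INR y / (1 + c)).
Proof. intros Hc. eapply (deriv_ext (mult_real_fct (INR y) (fun t => ln (1 + t)))).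
  - apply derivable_pt_lim_scal, d_ln1; auto.
  - intros; reflexivity.
  - unfold Rdiv. ring. Qed.

Lemma lnZ_deriv adj y c : 0 <= c -> derivable_pt_lim (fun t => ln (ZF adj y t)) c (ZFprime adj y c / ZF adj y c).
Proof. intros Hc. assert (H := ZF_ge1 adj y c Hc).
  eapply (deriv_ext (comp ln (ZF adj y))).
  - apply derivable_pt_lim_comp; [apply ZF_deriv|]. apply derivable_pt_lim_ln. lra.
  - intros; reflexivity.
  - unfold Rdiv. ring. Qed.

Lemma ln_ge0 x : 1 <= x -> 0 <= ln x.
Proof. intros H. destruct (Req_dec x 1) as [->|Hn]; [rewrite ln_1; lra|].
  rewrite <- ln_1. left. apply ln_increasing; lra. Qed.

Theorem mainTheorem5 (y : nat) (adj : nat -> nat -> bool)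
  (Hy : (1 <= y)%nat)
  (Hsym : forall i j, adj i j = adj j i)
  (Hirr : forall i, adj i i = false)
  (lam : R) (Hlam : 0 < lam) :
  derivable_pt_lim (ZF adj y) lam (ZFprime adj y lam) /\
  lam * ZFprime adj y lam / ZF adj y lam >=
    lam / (1 + lam) * INR y * Rpower (1 + lam) (- avgdeg adj y) /\
  (avgdeg adj y = 0 -> ln (ZF adj y lam) >= INR y * ln (1 + lam)) /\
  (avgdeg adj y > 0 ->
     ln (ZF adj y lam) >=
       INR y / avgdeg adj y * (1 - Rpower (1 + lam) (- avgdeg adj y))).
Proof.
  assert (HR := fun c => ratio_bound adj y c Hy Hsym Hirr).
  assert (L0 : 0 <= ln (ZF adj y 0)) by (apply ln_ge0, ZF_ge1; lra).
  split; [apply ZF_deriv|]. split; [|split].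
  - specialize (HR lam Hlam). unfold Rpower.
    replace (lam * ZFprime adj y lam / ZF adj y lam) with (lam * (ZFprime adj y lam / ZF adj y lam))
      by (unfold Rdiv; ring).
    replace (lam / (1 + lam) * INR y * exp (- avgdeg adj y * ln (1 + lam))) with
      (lam * (INR y / (1 + lam) * exp (- avgdeg adj y * ln (1 + lam)))) by (unfold Rdiv; ring).
    apply Rle_ge, Rmult_le_compat_l; [lra|]. apply Rge_le; auto.
  - intros Hd.
    assert (H := mono (fun t => ln (ZF adj y t)) (fun t => INR y * ln (1 + t))
       (fun c => ZFprime adj y c / ZF adj y c) (fun c => INR y / (1 + c)) lam Hlam).
    simpl in H. rewrite Rplus_0_r, ln_1, Rmult_0_r in H.
    assert (ln (ZF adj y lam) - ln (ZF adj y 0) >= INR y * ln (1 + lam) - 0).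
    { apply H.
      - intros; apply lnZ_deriv; lra.
      - intros; apply d_g0; lra.
      - intros c Hc. specialize (HR c (proj1 Hc)). rewrite Hd in HR.
        replace (-0 * ln (1 + c)) with 0 in HR by ring. rewrite exp_0, Rmult_1_r in HR. auto. }
    lra.
  - intros Hd.
    assert (H := mono (fun t => ln (ZF adj y t)) (fun t => INR y / avgdeg adj y * (1 - exp (- avgdeg adj y * ln (1 + t))))
       (fun c => ZFprime adj y c / ZF adj y c) (fun c => INR y / (1 + c) * exp (- avgdeg adj y * ln (1 + c))) lam Hlam).
    simpl in H. rewrite Rplus_0_r, ln_1, Rmult_0_r, exp_0, Rminus_diag, Rmult_0_r in H.
    unfold Rpower.
    assert (ln (ZF adj y lam) - ln (ZF adj y 0) >= INR y / avgdeg adj y * (1 - exp (- avgdeg adj y * ln (1 + lam))) - 0).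
    { apply H.
      - intros; apply lnZ_deriv; lra.
      - intros; apply d_g1; lra.
      - intros c Hc. apply HR; lra. }
    lra.
Qed.
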